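(* Let $\mathcal{C}^1, \mathcal{C}^2 \subset \mathbb{R}^l$, $p^1, p^2$, $p = p^2 - p^1 \neq 0$, $\mathcal{C} = \mathcal{C}^1 - \mathcal{C}^2 + \{p\}$, and the iterates $\beta^l_k$, $M^{i*}_k$, $(\nu^*_m)$, $z_m, z^1_m, z^2_m$, $\lambda_k$ of the growth distance algorithm be as described in the context. Then for every iteration $k \geq 0$ executed by the algorithm, the following hold: (i) (Primal feasibility) With $\beta = \beta^l_k$, $z = \sum_{m \in M^{i*}_k} \beta \nu^*_m z_m$, $\alpha = 1/\beta$, and $z^i = \sum_{m \in M^{i*}_k} \beta \nu^*_m z^i_m$ for $i \in \{1,2\}$, the pair $(\beta, z)$ is feasible for the ray intersection problem and the triple $(\alpha, z^1, z^2)$ is feasible for the growth distance problem. Moreover, $\beta > 0$ and $\alpha > 0$. (ii) (Dual feasibility) $\langle \lambda_k, z_{m_1}\rangle = \langle \lambda_k, z_{m_2}\rangle$ for all $m_1, m_2 \in M^{i*}_k$, and $\langle \lambda_k, p\rangle > 0$. (iii) (Simplex property) $\{z_m\}_{m \in M^{i*}_k} \subset \mathcal{C}$ is a linearly independent set (with $|M^{i*}_k| = l$).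
   Context: A proper convex (PC) set is a compact convex subset of $\mathbb{R}^l$ with nonempty interior. For a compact convex $\mathcal{C}$, $B_r(x)$ is the closed Euclidean ball, the inradius is $r(\mathcal{C}, x) = \max\{r \ge 0 : B_r(x) \subset \mathcal{C}\}$, the support function is $s_v[\mathcal{C}](\lambda) = \max_{z \in \mathcal{C}} \langle \lambda, z\rangle$, and a support point function $s_p[\mathcal{C}]$ is any selection $s_p[\mathcal{C}](\lambda) \in \arg\max_{z \in \mathcal{C}} \langle \lambda, z\rangle$ (arbitrary selection allowed). Setting: $\mathcal{C}^1$ is a PC set, $\mathcal{C}^2 \neq \emptyset$ is compact convex, $p^1 \in \operatorname{int}\mathcal{C}^1$, $p^2 \in \mathcal{C}^2$, $p^1 \neq p^2$, $r^i = r(\mathcal{C}^i, p^i)$ are known, and $\underline{r} = r^1 + r^2 > 0$. Let $p = p^2 - p^1$ and $\mathcal{C} = \mathcal{C}^1 - \mathcal{C}^2 + \{p\} = \{z^1 - z^2 + p: z^i \in \mathcal{C}^i\}$; then $B_{\underline r}(0) \subset \mathcal{C}$. Support values/points of $\mathcal{C}$ are computed as $s_v[\mathcal{C}](\lambda) = s_v[\mathcal{C}^1](\lambda) + s_v[\mathcal{C}^2](-\lambda) + \langle \lambda, p\rangle$ and $s_p[\mathcal{C}](\lambda) = s_p[\mathcal{C}^1](\lambda) - s_p[\mathcal{C}^2](-\lambda) + p$. Growth distance problem: minimize $\alpha$ over $\alpha \ge 0$, $z^1 \in \mathcal{C}^1$, $z^2 \in \mathcal{C}^2$ subject to $\alpha(z^1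 - p^1) + p^1 = \alpha(z^2 - p^2) + p^2$. Ray intersection problem: maximize $\beta$ over $(\beta, z)$ subject to $z \in \mathcal{C}$, $z = \beta p$. Algorithm. Initialization ($k=0$): $M^o_0 = \emptyset$, $\beta^u_0 = \infty$; $M^i_0 = \{-l+1, \dots, 0\}$; choose $l-1$ linearly independent unit vectors $p^\perp_m$ ($m = -l+1, \dots, -1$) orthogonal to $p$, and set $z_m = K p^\perp_m + \epsilon p/\|p\|$ for $m = -l+1,\dots,-1$ and $z_0 = l\epsilon p/\|p\| - \sum_{m=-l+1}^{-1} z_m$, where $\epsilon > 0$, $K > 0$ are such that $\|z_m\| \le \underline r$ for all $m \in M^i_0$; for each such $m$ fix some $z^1_m \in \mathcal{C}^1$, $z^2_m \in \mathcal{C}^2$ with $z_m = z^1_m - z^2_m + p$. Set $M^{i*}_0 = M^i_0$, $\beta^l_0 = \epsilon/\|p\|$, the basic values $\nu^*_m = \|p\|/(l\epsilon)$ for $m \in M^{i*}_0$, and $\lambda_0 = p/\|p\|_\infty$. Iteration $k \ge 1$: compute $z^1_k = s_p[\mathcal{C}^1](\lambda_{k-1})$, $z^2_k = s_p[\mathcal{C}^2](-\lambda_{k-1})$, $z_k = z^1_k - z^2_k + p$, $v_k = s_v[\mathcal{C}](\lambda_{k-1})$. Outer update: $M^o_k = \{m^*\}$ with $m^* \in \arg\min_{m \in M^o_{k-1} \cup \{k\}} v_m/\langle \lambda_{m-1}, p\rangle$ and $\beta^u_k = \min\{\beta^u_{k-1}, v_k/\langle \lambda_{k-1}, p\rangle\}$.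 Inner update: set $M^i_k = M^i_{k-1} \cup \{k\}$ and solve the linear program $\min \sum_{m \in M^i_k} \nu_m$ subject to $\sum_{m \in M^i_k} \nu_m z_m = p$, $\nu \ge 0$, by the primal Simplex method started from the basis $M^{i*}_{k-1}$ (entering index chosen with most negative reduced cost, leaving index by the minimum-ratio test, with Bland's anti-cycling rule), giving an optimal basis $M^{i*}_k \subset M^i_k$ and basic optimal solution $(\nu^*_m)$ (with $\nu^*_m = 0$ off the basis); set $\beta^l_k = (\sum_m \nu^*_m)^{-1}$. Then $M^i_k$ may be pruned to any subset still containing $M^{i*}_k$. Set $\lambda_k = Z^{-\top}\mathbf{1}$ where $Z = [z_{m_1} \cdots z_{m_l}]$, $\{m_1,\dots,m_l\} = M^{i*}_k$, and then normalize $\lambda_k \leftarrow \lambda_k/\|\lambda_k\|_\infty$. The algorithm stops when $\beta^u_k/\beta^l_k - 1 < \epsilon_{tol}$ or $k = K_{max}$. *)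

(* Defs.v *)
From HB Require Import structures.
From mathcomp Require Import all_boot all_order all_algebra.
From mathcomp Require Import all_classical all_reals all_analysis.
Set Implicit Arguments. Unset Strict Implicit. Unset Printing Implicit Defensive.
Import Order.TTheory GRing.Theory Num.Theory.
Import numFieldNormedType.Exports.
Local Open Scope classical_set_scope.
Local Open Scope ring_scope.

Section GD.
Variables (R : realType) (l : nat).
Notation vec := 'rV[R]_l.

Definition dot (u v : vec) : R := \sum_(i < l) u ord0 i * v ord0 i.
Definition enorm (u : vec) : R := Num.sqrt (dot u u).
Definition infnorm (u : vec) : R := \big[Num.max/0]_(i < l) `|u ord0 i|.

Definition PC_set (C : set vec) : Prop :=
  compact C /\ convex.convex_set C /\ (interior C !=set0).

Definition cball (x : vec) (r : R) : set vec := [set y | enorm (y - x) <= r].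

Definition is_inradius (C : set vec) (x : vec) (r : R) : Prop :=
  0 <= r /\ cball x r `<=` C /\
  (forall r', 0 <= r' -> cball x r' `<=` C -> r' <= r).

Definition mdiff (C1 C2 : set vec) (p : vec) : set vec :=
  [set y | exists z1 z2, C1 z1 /\ C2 z2 /\ y = z1 - z2 + p].

Definition is_support_point (C : set vec) (lam z : vec) : Prop :=
  C z /\ forall y, C y -> dot lam y <= dot lam z.

Definition lin_indep (s : seq int) (v : int -> vec) : Prop :=
  forall c : int -> R, \sum_(m <- s) c m *: v m = 0 -> forall m, m \in s -> c m = 0.

Definition rip_feasible (C : set vec) (p : vec) (beta : R) (z : vec) : Prop :=
  C z /\ z = beta *: p.
Definition gd_feasible (C1 C2 : set vec) (p1 p2 : vec) (alpha : R) (z1 z2 : vec) : Prop :=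
  0 <= alpha /\ C1 z1 /\ C2 z2 /\
  alpha *: (z1 - p1) + p1 = alpha *: (z2 - p2) + p2.

(* ---------- Simplex method for  min sum nu  s.t.  sum nu_m z_m = p, nu >= 0 ---------- *)
Definition basis_mx (z : int -> vec) (B : seq int) : 'M[R]_l :=
  \matrix_(i < l, j < l) z (nth 0 B j) ord0 i.
Definition basic_sol (z : int -> vec) (B : seq int) (p : vec) : 'cV[R]_l :=
  invmx (basis_mx z B) *m p^T.
Definition dual_vec (z : int -> vec) (B : seq int) : vec :=
  (invmx (basis_mx z B)^T *m const_mx 1)^T.
(* reduced cost of column j (all costs equal to 1) *)
Definition redcost (z : int -> vec) (B : seq int) (j : int) : R :=
  1 - dot (dual_vec z B) (z j).
Definition sdir (z : int -> vec) (B : seq int) (j : int) : 'cV[R]_l :=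
  invmx (basis_mx z B) *m (z j)^T.

(* one primal Simplex pivot on the column set A: entering index with most
   negative reduced cost, leaving index by the minimum-ratio test, ties broken
   by smallest index (Bland) *)
Definition pivot (z : int -> vec) (p : vec) (A : seq int) (B B' : seq int) : Prop :=
  exists (j : int) (r : 'I_l),
    [/\ j \in A /\ j \notin B, redcost z B j < 0,
     (forall j', j' \in A -> j' \notin B ->
        redcost z B j <= redcost z B j' /\
        (redcost z B j' = redcost z B j -> (j <= j')%R)),
     0 < sdir z B j r ord0 /\
     (forall s : 'I_l, 0 < sdir z B j s ord0 ->
        basic_sol z B p r ord0 / sdir z B j r ord0
          <= basic_sol z B p s ord0 / sdir z B j s ord0 /\
        (basic_sol z B p s ord0 / sdir z B j s ord0
           = basic_sol z B p r ord0 / sdir z B j r ord0 ->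
         (nth 0 B r <= nth 0 B s)%R))
     & B' = set_nth 0 B r j].

Definition simplex_optimal (z : int -> vec) (A B : seq int) : Prop :=
  forall j, j \in A -> 0 <= redcost z B j.

Inductive simplex_run (z : int -> vec) (p : vec) (A : seq int) :
    seq int -> seq int -> Prop :=
  | srun_stop B : simplex_optimal z A B -> simplex_run z p A B B
  | srun_step B B' Bf : pivot z p A B B' -> simplex_run z p A B' Bf ->
                        simplex_run z p A B Bf.

Definition perp_idx : seq int := [seq - (Posz i.+1) | i <- iota 0 l.-1].
Definition init_idx : seq int := 0 :: perp_idx.

(* The data of a run up to iteration k.  zz1 m, zz2 m are z^1_m, z^2_m, and
   z_m := z^1_m - z^2_m + p; lam j = lambda_j, Mi j = M^i_j (after pruning),
   B j = M^{i*}_j (ordered), nu j m = nu^*_m at iteration j. *)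
Definition gd_run (C1 C2 : set vec) (p1 p2 : vec) (rbar eps K : R)
    (pperp : int -> vec) (zz1 zz2 : int -> vec) (lam : nat -> vec)
    (Mi B : nat -> seq int) (nu : nat -> int -> R) (k : nat) : Prop :=
  let p := p2 - p1 in
  let z := fun m => zz1 m - zz2 m + p in
  [/\ (0 < eps /\ 0 < K) /\
      (forall m, m \in perp_idx -> enorm (pperp m) = 1 /\ dot (pperp m) p = 0)
        /\ lin_indep perp_idx pperp,
      (forall m, m \in perp_idx -> z m = K *: pperp m + (eps / enorm p) *: p)
        /\ z 0 = ((l%:R * eps) / enorm p) *: p - \sum_(m <- perp_idx) z m,
      (forall m, m \in init_idx -> enorm (z m) <= rbar /\ C1 (zz1 m) /\ C2 (zz2 m)),
      [/\ Mi 0%N = init_idx, B 0%N = init_idx,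
          (forall m, nu 0%N m = if m \in init_idx then enorm p / (l%:R * eps) else 0)
        & lam 0%N = (infnorm p)^-1 *: p]
    &
      forall j : nat, (0 < j <= k)%N ->
      let A := rcons (Mi j.-1) (Posz j) in
      [/\ is_support_point C1 (lam j.-1) (zz1 (Posz j)),
          is_support_point C2 (- lam j.-1) (zz2 (Posz j)),
          simplex_run z p A (B j.-1) (B j),
          ((forall i : 'I_l, nu j (nth 0 (B j) i) = basic_sol z (B j) p i ord0)
            /\ (forall m, m \notin B j -> nu j m = 0)) /\
          ({subset B j <= Mi j} /\ {subset Mi j <= A})
        & lam j = (infnorm (dual_vec z (B j)))^-1 *: dual_vec z (B j)]].

End GD.

(* Main.v *)
Require Import Defs.
From HB Require Import structures.
From mathcomp Require Import all_boot all_order all_algebra.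
From mathcomp Require Import all_classical all_reals all_analysis.
From mathcomp Require Import ring lra.
Import Order.TTheory GRing.Theory Num.Theory.
Import numFieldNormedType.Exports.
Local Open Scope classical_set_scope.
Local Open Scope ring_scope.
Set Implicit Arguments. Unset Strict Implicit. Unset Printing Implicit Defensive.

Section S.
Variables (R : realType) (l : nat).
Notation vec := 'rV[R]_l.

Lemma conv2 (A : set vec) x y (t : R) : convex.convex_set A -> 0 <= t -> t <= 1 ->
  A x -> A y -> A (t *: x + (1 - t) *: y).
Proof.
move=> cA t0 t1 Ax Ay.
have := cA x y (Itv01 t0 t1) (mem_set Ax) (mem_set Ay).
by rewrite inE.
Qed.

Lemma convex_comb (A : set vec) (s : seq int) (w : int -> R) (v : int -> vec) :
  convex.convex_set A -> (forall m, m \in s -> 0 <= w m) ->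
  \sum_(m <- s) w m = 1 -> (forall m, m \in s -> A (v m)) ->
  A (\sum_(m <- s) w m *: v m).
Proof.
move=> cA; elim: s w => [|a s IH] w w0; first by rewrite big_nil => /eqP; rewrite eq_sym oner_eq0.
rewrite !big_cons => sw Av.
have wa0 : 0 <= w a by apply: w0; rewrite mem_head.
have ws0 : forall m, m \in s -> 0 <= w m by move=> m ms; apply: w0; rewrite in_cons ms orbT.
have sge0 : 0 <= \sum_(m <- s) w m by rewrite big_seq; apply: sumr_ge0 => m /ws0.
have [ha|ha] := eqVneq (w a) 1.
  have s0 : \sum_(m <- s) w m = 0 by apply: (addrI (w a)); rewrite addr0 sw ha.
  have wm0 : forall m, m \in s -> w m = 0.
    move=> m ms; apply/eqP; move: s0; rewrite big_seq => /eqP; rewrite psumr_eq0.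
      by move=> /allP /(_ m ms) /implyP /(_ ms).
    by move=> i /ws0.
  rewrite big_seq big1 ?addr0 ?ha ?scale1r; first by apply: Av; rewrite mem_head.
  by move=> m ms; rewrite wm0 // scale0r.
set T := \sum_(m <- s) w m.
have Tpos : 0 < T.
  rewrite lt_neqAle sge0 andbT; apply/eqP => T0.
  by move: sw; rewrite -/T -T0 addr0; apply/eqP.
have -> : \sum_(m <- s) w m *: v m = (1 - w a) *: \sum_(m <- s) (w m / T) *: v m.
  have -> : 1 - w a = T by rewrite -sw addrC addKr.
  rewrite scaler_sumr; apply: eq_bigr => m _; rewrite scalerA; congr (_ *: _).
  by rewrite mulrCA mulfV ?mulr1 // gt_eqF.
apply: conv2 => //.
- by rewrite -sw lerDl.
- by apply: Av; rewrite mem_head.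
apply: IH.
- by move=> m ms; apply: divr_ge0 => //; apply: ws0.
- by rewrite -mulr_suml mulfV // gt_eqF.
- by move=> m ms; apply: Av; rewrite in_cons ms orbT.
Qed.
End S.
Section LA.
Variables (R : realType) (l : nat).
Notation vec := 'rV[R]_l.
Implicit Types (u v w : vec).

Lemma dot_mx u v : dot u v = (u *m v^T) 0 0.
Proof. by rewrite /dot mxE; apply: eq_bigr => i _; rewrite !mxE. Qed.

Lemma dotC u v : dot u v = dot v u.
Proof. by rewrite /dot; apply: eq_bigr => i _; rewrite mulrC. Qed.

Lemma dotDr u v w : dot u (v + w) = dot u v + dot u w.
Proof. by rewrite /dot -big_split; apply: eq_bigr => i _; rewrite !mxE mulrDr. Qed.

Lemma dotZr u v a : dot u (a *: v) = a * dot u v.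
Proof. by rewrite /dot mulr_sumr; apply: eq_bigr => i _; rewrite !mxE mulrCA. Qed.

Lemma dotZl u v a : dot (a *: u) v = a * dot u v.
Proof. by rewrite dotC dotZr dotC. Qed.

Lemma dotNr u v : dot u (- v) = - dot u v.
Proof. by rewrite -scaleN1r dotZr mulN1r. Qed.

Lemma dotBr u v w : dot u (v - w) = dot u v - dot u w.
Proof. by rewrite dotDr dotNr. Qed.

Lemma dot0r u : dot u 0 = 0.
Proof. by rewrite -(scale0r 0) dotZr mul0r. Qed.

Lemma dot_sumr I (s : seq I) (F : I -> vec) u :
  dot u (\sum_(m <- s) F m) = \sum_(m <- s) dot u (F m).
Proof.
elim: s => [|a s IH]; first by rewrite !big_nil dot0r.
by rewrite !big_cons dotDr IH.
Qed.

Lemma dot_gt0 u : u != 0 -> 0 < dot u u.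
Proof.
move=> u0.
have [i ui] : exists i, u 0 i != 0.
  apply/existsP; apply: contraR u0 => /existsPn H; apply/eqP/rowP => i.
  by rewrite mxE; apply/eqP; move: (H i); rewrite negbK.
rewrite /dot (bigD1 i) //=.
have h1 : 0 < u 0 i * u 0 i by rewrite lt_def mulf_neq0 //= -expr2 sqr_ge0.
have h2 : 0 <= \sum_(j < l | j != i) u 0 j * u 0 j by apply: sumr_ge0 => j _; rewrite -expr2 sqr_ge0.
lra.
Qed.

Lemma infnorm_gt0 u : u != 0 -> 0 < infnorm u.
Proof.
move=> u0.
have [i ui] : exists i, u 0 i != 0.
  apply/existsP; apply: contraR u0 => /existsPn H; apply/eqP/rowP => i.
  by rewrite mxE; apply/eqP; move: (H i); rewrite negbK.
by rewrite /infnorm (bigD1 i) //= lt_max normr_gt0 ui.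
Qed.

Lemma sum_nth (T : Type) (B : seq int) (F : int -> T -> T) :
  True.
Proof. by []. Qed.

Lemma sum_nthR (B : seq int) (F : int -> vec) : size B = l ->
  \sum_(m <- B) F m = \sum_(i < l) F (nth 0 B i).
Proof. by move=> sB; rewrite (big_nth 0) sB big_mkord. Qed.

Lemma sum_nthS (B : seq int) (F : int -> R) : size B = l ->
  \sum_(m <- B) F m = \sum_(i < l) F (nth 0 B i).
Proof. by move=> sB; rewrite (big_nth 0) sB big_mkord. Qed.

Lemma basis_mulE (z : int -> vec) B (c : 'cV[R]_l) :
  (basis_mx z B *m c)^T = \sum_(j < l) c j 0 *: z (nth 0 B j).
Proof.
apply/rowP => i; rewrite !mxE summxE; apply: eq_bigr => j _.
by rewrite !mxE mulrC.
Qed.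

Lemma unit_of_inj (A : 'M[R]_l) :
  (forall c : 'cV[R]_l, A *m c = 0 -> c = 0) -> A \in unitmx.
Proof.
move=> H; rewrite -unitmx_tr -row_free_unit -kermx_eq0; apply/eqP/row_matrixP => i.
rewrite row0; apply: trmx_inj; rewrite trmx0; apply: H.
have : row i (kermx A^T) *m A^T = 0 by rewrite -row_mul mulmx_ker row0.
by move/(congr1 trmx); rewrite trmx_mul trmxK trmx0.
Qed.

End LA.
Section PV.
Variables (R : realType) (l : nat) (z : int -> 'rV[R]_l) (p : 'rV[R]_l).

Definition Inv (B : seq int) : Prop :=
  [/\ size B = l, basis_mx z B \in unitmx & forall i, 0 <= basic_sol z B p i ord0].

Lemma pivot_inv A B B' : Inv B -> pivot z p A B B' -> Inv B'.
Proof.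
case=> sB uZ xge [j [r [_ _ _ [dr_pos ratio] ->]]].
set Z := basis_mx z B in uZ *; set d := sdir z B j in dr_pos ratio *; set x := basic_sol z B p in xge ratio *.
pose E : 'M[R]_l := \matrix_(a, b) (if b == r then d a ord0 else (a == b)%:R).
have nthB' : forall b : 'I_l, nth 0 (set_nth 0 B r j) b = if b == r then j else nth 0 B b.
  by move=> b; rewrite nth_set_nth.
have Zd : Z *m d = (z j)^T by rewrite /d /sdir mulKVmx.
have bsE : forall Z', Z' \in unitmx -> forall y, p^T = Z' *m y -> invmx Z' *m p^T = y.
  by move=> Z' uZ' y ->; rewrite mulKmx.
have px : p^T = Z *m x by rewrite /x /basic_sol mulKVmx.
have Zij : forall a c, Z a c = z (nth 0 B c) ord0 a by move=> a c; rewrite /Z mxE.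
clearbody d x Z.
have ZE : basis_mx z (set_nth 0 B r j) = Z *m E.
  apply/matrixP => a b; rewrite !mxE nthB'.
  case: eqP => [->|nbr].
    have := congr1 (fun M : 'M[R]_(l,1) => M a ord0) Zd; rewrite !mxE => <-.
    by apply: eq_bigr => c _; rewrite !mxE eqxx Zij.
  rewrite (bigD1 b) //= big1 => [|c cb].
    by rewrite !mxE Zij; move/eqP: nbr => /negbTE ->; rewrite eqxx mulr1 addr0.
  rewrite !mxE; move/eqP: nbr => /negbTE ->.
  by rewrite (negbTE cb) mulr0.
have Ec : forall (c : 'cV[R]_l) a, (E *m c) a ord0 = d a ord0 * c r ord0 + (if a == r then 0 else c a ord0).
  move=> c a; rewrite mxE (bigD1 r) //= !mxE eqxx; congr (_ + _).
  case: eqP => [->|nar].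
    apply: big1 => b br; rewrite !mxE (negbTE br) eq_sym (negbTE br) mul0r //.
  rewrite (bigD1 a) //=; last by apply/eqP.
  rewrite big1 => [|b /andP [br ba]].
    rewrite !mxE eqxx; move/eqP: nar => /negbTE ->; by rewrite mul1r addr0.
  by rewrite !mxE (negbTE br) eq_sym (negbTE ba) mul0r.
have dr0 : d r ord0 != 0 by rewrite gt_eqF.
have uE : E \in unitmx.
  apply: unit_of_inj => c Ec0.
  have cr : c r ord0 = 0.
    have := congr1 (fun M : 'M[R]_(l,1) => M r ord0) Ec0; rewrite Ec eqxx addr0 mxE => /eqP.
    by rewrite mulf_eq0 (negbTE dr0) => /eqP.
  apply/matrixP => a b; rewrite [b]ord1 mxE.
  have := congr1 (fun M : 'M[R]_(l,1) => M a ord0) Ec0; rewrite Ec cr mulr0 add0r mxE.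
  by case: eqP => [-> _|_ ->].
have uZ' : Z *m E \in unitmx by rewrite unitmx_mul uZ uE.
pose x' : 'cV[R]_l := \col_a (if a == r then x r ord0 / d r ord0 else x a ord0 - d a ord0 * (x r ord0 / d r ord0)).
have Ex' : E *m x' = x.
  apply/matrixP => a b; rewrite [b]ord1 Ec !mxE eqxx.
  case: eqP => [->|_]; first by rewrite addr0 mulrC divfK.
  by rewrite addrC subrK.
have bs : basic_sol z (set_nth 0 B r j) p = x'.
  by rewrite /basic_sol ZE; apply: bsE => //; rewrite px -Ex' mulmxA.
split.
- by rewrite size_set_nth sB; apply/maxn_idPr; rewrite ltn_ord.
- by rewrite ZE.
move=> a; rewrite bs mxE.
case: eqP => [_|nar]; first by rewrite divr_ge0 ?xge // ltW.
have [da0|da0] := leP (d a ord0) 0.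
  have : 0 <= x r ord0 / d r ord0 by rewrite divr_ge0 ?xge // ltW.
  have := xge a; nra.
have [+ _] := ratio a da0.
rewrite -/x -/d.
move=> h; have := ler_wpM2r (ltW da0) h.
rewrite divfK ?gt_eqF // => h2.
by rewrite subr_ge0 mulrC.
Qed.

Lemma run_inv A B Bf : Inv B -> simplex_run z p A B Bf -> Inv Bf.
Proof.
move=> IB H; elim: H IB => // B0 B1 B2 piv _ IH IB.
by apply: IH; apply: pivot_inv piv.
Qed.

Lemma inv_props B : Inv B -> p != 0 ->
  [/\ uniq B, lin_indep B z,
      0 < \sum_(i < l) basic_sol z B p i ord0,
      (forall i : 'I_l, dot (dual_vec z B) (z (nth 0 B i)) = 1)
    & dot (dual_vec z B) p = \sum_(i < l) basic_sol z B p i ord0].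
Proof.
case=> sB uZ xge p0.
set Z := basis_mx z B in uZ *; set x := basic_sol z B p in xge *.
have px : p^T = Z *m x by rewrite /x /basic_sol mulKVmx.
have wZ : dual_vec z B *m Z = const_mx 1.
  by rewrite /dual_vec -[X in _ *m X]trmxK -trmx_mul mulKVmx ?unitmx_tr //; apply/matrixP => a b; rewrite !mxE.
have Zij : forall a c, Z a c = z (nth 0 B c) ord0 a by move=> a c; rewrite /Z mxE.
have ZmE : forall c : 'cV[R]_l, (Z *m c)^T = \sum_(j < l) c j 0 *: z (nth 0 B j).
  by move=> c; rewrite /Z basis_mulE.
clearbody x Z.
have Zinj : forall c : 'cV[R]_l, Z *m c = 0 -> c = 0.
  by move=> c Zc; rewrite -(mulKmx uZ c) Zc mulmx0.
split.
- apply/negPn/negP => /(uniqPn 0) [i [k [ik]]]; rewrite sB => kl eqik.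
  pose ci : 'cV[R]_l := \col_a ((val a == i)%:R - (val a == k)%:R).
  have : Z *m ci = 0.
    apply: trmx_inj; rewrite ZmE trmx0.
    rewrite (bigD1 (Ordinal (ltn_trans ik kl))) //= (bigD1 (Ordinal kl)) /=; last first.
      by rewrite -val_eqE /= eq_sym neq_ltn ik.
    rewrite big1 => [|a /andP [ai ak]]; last first.
      rewrite !mxE; move: ai ak; rewrite -!val_eqE /= => /negbTE -> /negbTE ->.
      by rewrite subrr scale0r.
    rewrite !mxE /= eqxx (gtn_eqF ik) (ltn_eqF ik) eqxx eqik.
    by rewrite addr0 subr0 sub0r scale1r scaleN1r subrr.
  move/Zinj/matrixP => /(_ (Ordinal (ltn_trans ik kl)) ord0).
  by rewrite !mxE /= eqxx (ltn_eqF ik) subr0 => /eqP; rewrite oner_eq0.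
- move=> c sc m mB.
  pose cv : 'cV[R]_l := \col_a c (nth 0 B a).
  have : Z *m cv = 0.
    apply: trmx_inj; rewrite ZmE trmx0; apply: etrans sc.
    rewrite (sum_nthR _ sB); by apply: eq_bigr => a _; rewrite mxE.
  move/Zinj/matrixP.
  have mi : (index m B < l)%N by rewrite -sB index_mem.
  move=> /(_ (Ordinal mi) ord0); rewrite !mxE /= nth_index //.
- have x0 : x != 0.
    apply: contra_neq p0 => x0; apply: trmx_inj; by rewrite px x0 mulmx0 trmx0.
  have [i xi] : exists i, x i ord0 != 0.
    apply/existsP; apply: contraR x0 => /existsPn H; apply/eqP/matrixP => i b.
    have -> : b = ord0 by apply: ord_inj; case: b => [[|n] //]. 
    by rewrite mxE; move: (H i); rewrite negbK => /eqP.
  rewrite (bigD1 i) //=.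
  have h1 : 0 < x i ord0 by rewrite lt_def xi xge.
  have h2 : 0 <= \sum_(j < l | j != i) x j ord0 by apply: sumr_ge0 => j _.
  lra.
- move=> i.
  have := congr1 (fun M : 'M[R]_(1,l) => M ord0 i) wZ; rewrite !mxE => <-.
  by rewrite /dot; apply: eq_bigr => a _; rewrite Zij.
rewrite dot_mx px mulmxA wZ mxE; apply: eq_bigr => a _; by rewrite mxE mul1r.
Qed.
End PV.
Section Init.
Variables (R : realType) (n : nat).
Notation vec := 'rV[R]_n.+1.

Lemma perp_sum (V : zmodType) (F : int -> V) :
  \sum_(m <- perp_idx n.+1) F m = \sum_(i < n) F (- (Posz i.+1)).
Proof. by rewrite /perp_idx big_map /= -(big_mkord xpredT (fun i => F (- Posz i.+1))) /index_iota subn0. Qed.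

Lemma perp_mem (i : 'I_n) : - (Posz i.+1) \in perp_idx n.+1.
Proof. by apply/mapP; exists (val i) => //; rewrite mem_iota /= add0n ltn_ord. Qed.

Lemma init_ok (z pp : int -> vec) (p : vec) (eps K : R) :
 p != 0 -> 0 < eps -> 0 < K ->
 (forall m, m \in perp_idx n.+1 -> dot (pp m) p = 0) -> lin_indep (perp_idx n.+1) pp ->
 (forall m, m \in perp_idx n.+1 -> z m = K *: pp m + (eps / enorm p) *: p) ->
 z 0 = ((n.+1%:R * eps) / enorm p) *: p - \sum_(m <- perp_idx n.+1) z m ->
 [/\ basis_mx z (init_idx n.+1) \in unitmx,
     basic_sol z (init_idx n.+1) p = const_mx (enorm p / (n.+1%:R * eps)),
     size (init_idx n.+1) = n.+1
   & forall m, m \in init_idx n.+1 -> dot p (z m) = eps * enorm p].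
Proof.
move=> p0 eps0 K0 hpp li zperp z0.
have np : 0 < enorm p by rewrite /enorm sqrtr_gt0 dot_gt0.
have epp : dot p p = enorm p ^+ 2 by rewrite /enorm sqr_sqrtr // ltW // dot_gt0.
set a := eps / enorm p in zperp *.
set a' := (n.+1%:R * eps) / enorm p in z0 *.
have a'p : 0 < a' by rewrite /a' divr_gt0 // mulr_gt0 // ltr0Sn.
have a'0 : a' != 0 by rewrite gt_eqF.
have sizeI : size (init_idx n.+1) = n.+1 by rewrite /= size_map size_iota.
have nthIl : forall i : 'I_n, nth 0 (init_idx n.+1) (lift ord0 i) = - Posz i.+1.
  by move=> i; rewrite lift0 /= (nth_map 0) ?size_iota // nth_iota.
have zi : forall i : 'I_n, z (- Posz i.+1) = K *: pp (- Posz i.+1) + a *: p.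
  by move=> i; apply: zperp; apply: perp_mem.
have uZ : basis_mx z (init_idx n.+1) \in unitmx.
  apply: unit_of_inj => u Zu.
  have S0 : \sum_(b < n.+1) u b 0 *: z (nth 0 (init_idx n.+1) b) = 0.
    by rewrite -basis_mulE Zu trmx0.
  rewrite big_ord_recl (_ : nth 0 (init_idx n.+1) (@ord0 n) = 0) // z0 perp_sum in S0.
  have E1 : \sum_(i<n) u (lift ord0 i) 0 *: z (nth 0 (init_idx n.+1) (lift ord0 i)) =
    \sum_(i<n) u (lift ord0 i) 0 *: z (- Posz i.+1) by apply: eq_bigr => i _; rewrite nthIl.
  rewrite E1 in S0.
  pose v i := u (lift ord0 i) 0 - u 0 0.
  pose Q := \sum_(i < n) v i *: pp (- Posz i.+1).
  pose T := \sum_(i < n) v i.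
  have key : u 0 0 *: (a' *: p - \sum_(i < n) z (- Posz i.+1)) +
      \sum_(i < n) u (lift ord0 i) 0 *: z (- Posz i.+1) = (u 0 0 * a' + a * T) *: p + K *: Q.
    have e1 : \sum_(i < n) u (lift ord0 i) 0 *: z (- Posz i.+1) - \sum_(i < n) u 0 0 *: z (- Posz i.+1)
        = K *: Q + (a * T) *: p.
      rewrite -sumrB /Q /T scaler_sumr mulr_sumr scaler_suml -big_split; apply: eq_bigr => i _.
      by rewrite zi /v; apply/rowP => c; rewrite !mxE; ring.
    rewrite scalerBr scaler_sumr -addrA [X in _ + X]addrC e1 scalerA scalerDl.
    by rewrite [K *: Q + _]addrC addrA.
  rewrite key in S0.
  have dQ : dot p Q = 0.
    rewrite /Q dot_sumr big1 // => i _; rewrite dotZr dotC hpp ?mulr0 //; exact: perp_mem.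
  have c00 : u 0 0 * a' + a * T = 0.
    have := congr1 (dot p) S0; rewrite dotDr !dotZr dQ mulr0 addr0 dot0r epp => /eqP.
    rewrite mulf_eq0 sqrf_eq0 (gt_eqF np) orbF => /eqP //.
  rewrite c00 scale0r add0r in S0.
  have Q0 : Q = 0 by move/eqP: S0; rewrite scaler_eq0 (gt_eqF K0) /= => /eqP.
  pose c (m : int) := (if insub (`|m|%N.-1) is Some i then u (lift ord0 i) 0 else 0) - u 0 0.
  have cE : forall i : 'I_n, c (- Posz i.+1) = v i.
    by move=> i; rewrite /c abszN absz_nat /= valK.
  have vi0 : forall i, v i = 0.
    move=> i; rewrite -cE; apply: li (perp_mem i).
    apply: etrans Q0; rewrite perp_sum; apply: eq_bigr => j _; by rewrite cE.
  have T0 : T = 0 by rewrite /T big1.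
  have u00 : u 0 0 = 0.
    by move: c00; rewrite T0 mulr0 addr0 => /eqP; rewrite mulf_eq0 (negbTE a'0) orbF => /eqP.
  apply/matrixP => b d; rewrite [d]ord1 mxE.
  case: (unliftP ord0 b) => [i ->|->] //.
  by have := vi0 i; rewrite /v u00 subr0.
split => //.
- set cst := enorm p / (n.+1%:R * eps).
  have ca : cst * a' = 1.
    rewrite /cst /a'; field; apply/andP; split; rewrite ?mulf_neq0 ?gt_eqF ?ltr0Sn //.
  have pZ : p^T = basis_mx z (init_idx n.+1) *m const_mx cst.
    apply: trmx_inj; rewrite basis_mulE trmxK.
    under eq_bigr => i _ do rewrite mxE.
    rewrite -scaler_sumr -(sum_nthR _ sizeI) big_cons z0 subrK scalerA ca scale1r //.
  by rewrite /basic_sol pZ mulKmx.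
move=> m; rewrite in_cons => /orP [/eqP ->|mp]; last first.
  rewrite zperp // dotDr !dotZr dotC hpp // mulr0 add0r epp /a.
  by field; rewrite gt_eqF.
rewrite z0 dotBr dotZr epp dot_sumr.
rewrite (eq_big_seq (fun=> eps * enorm p)); last first.
  move=> m0 mp0; rewrite zperp // dotDr !dotZr dotC hpp // mulr0 add0r epp /a.
  by field; rewrite gt_eqF.
rewrite perp_sum sumr_const card_ord /a' -natr1 -mulr_natl.
by field; rewrite gt_eqF.
Qed.
End Init.
Lemma rV0_eq0 (R : realType) (l : nat) (v : 'rV[R]_l) : l = 0%N -> v = 0.
Proof.
move=> l0; apply/rowP => i; exfalso; have h := ltn_ord i.
have : (nat_of_ord i < 0)%N by apply: leq_trans h _; rewrite l0.
by [].
Qed.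

Unset Implicit Arguments.
Set Strict Implicit.

Theorem theorem1 (R : realType) (l : nat) (C1 C2 : set 'rV[R]_l)
    (p1 p2 : 'rV[R]_l) (r1 r2 eps K : R) (pperp : int -> 'rV[R]_l)
    (zz1 zz2 : int -> 'rV[R]_l) (lam : nat -> 'rV[R]_l)
    (Mi B : nat -> seq int) (nu : nat -> int -> R) (k : nat) :
  PC_set C1 ->
  compact C2 -> convex.convex_set C2 -> C2 !=set0 ->
  interior C1 p1 -> C2 p2 -> p1 != p2 ->
  is_inradius C1 p1 r1 -> is_inradius C2 p2 r2 -> 0 < r1 + r2 ->
  gd_run C1 C2 p1 p2 (r1 + r2) eps K pperp zz1 zz2 lam Mi B nu k ->
  let p := p2 - p1 in
  let C := mdiff C1 C2 p in
  let z := fun m => zz1 m - zz2 m + p in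
  let beta := (\sum_(m <- B k) nu k m)^-1 in
  let alpha := beta^-1 in
  let zc := \sum_(m <- B k) (beta * nu k m) *: z m in
  let zc1 := \sum_(m <- B k) (beta * nu k m) *: zz1 m in
  let zc2 := \sum_(m <- B k) (beta * nu k m) *: zz2 m in
  (* (i) primal feasibility *)
  [/\ rip_feasible C p beta zc /\ gd_feasible C1 C2 p1 p2 alpha zc1 zc2
        /\ 0 < beta /\ 0 < alpha,
      (* (ii) dual feasibility *)
      (forall m1 m2, m1 \in B k -> m2 \in B k ->
         dot (lam k) (z m1) = dot (lam k) (z m2)) /\ 0 < dot (lam k) p
    & (* (iii) simplex property *)
      (forall m, m \in B k -> C (z m)) /\ lin_indep (B k) z
        /\ uniq (B k) /\ size (B k) = l].
Proof.
move=> [_ [cvC1 _]] _ cvC2 _ _ _ p12 _ _ _ run p C z beta alpha zc zc1 zc2.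
have p0 : p != 0 by rewrite /p subr_eq0 eq_sym.
have [n ln] : exists n, l = n.+1.
  exists l.-1; rewrite prednK //; rewrite lt0n; apply/negP => /eqP l0.
  by move/negP: p0; apply; rewrite (rV0_eq0 p l0).
subst l.
case: run => [[[eps0 K0] [hpp li]] [zperp z0] initC [Mi0 B0 nu0 lam0] iter].
have hpp' : forall m, m \in perp_idx n.+1 -> dot (pperp m) p = 0 by move=> m /hpp [].
have [uI bsI sI dI] := init_ok p0 eps0 K0 hpp' li zperp z0.
have MiC : forall j, (j <= k)%N -> forall m, m \in Mi j -> C1 (zz1 m) /\ C2 (zz2 m).
  elim => [_ m|j IH jk m].
    by rewrite Mi0 => /initC [_ [h1 h2]].
  have [[sp1 _] [sp2 _] _ [_ [_ MA]] _] := iter j.+1 jk.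
  move/MA; rewrite mem_rcons in_cons => /orP [/eqP ->|mj] //.
  by apply: IH => //; apply: ltnW.
have BMi : forall j, (j <= k)%N -> {subset B j <= Mi j}.
  case => [_|j jk]; first by rewrite B0 Mi0.
  by have [_ _ _ [_ [BM _]] _] := iter j.+1 jk.
have IB : forall j, (j <= k)%N -> Inv z p (B j).
  elim => [_|j IH jk].
    rewrite B0; split => // i; rewrite bsI mxE divr_ge0 // ?mulr_ge0 ?ltW ?ler0n //.
    by rewrite /enorm sqrtr_gt0 dot_gt0.
  have [_ _ rn _ _] := iter j.+1 jk.
  by apply: run_inv rn; apply: IH; apply: ltnW.
have nuE : forall i : 'I_n.+1, nu k (nth 0 (B k) i) = basic_sol z (B k) p i ord0.
  case: (posnP k) => [k0 i|kpos].
    rewrite k0 nu0 B0 bsI mxE mem_nth //; by rewrite sI.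
  have kk : (0 < k <= k)%N by rewrite kpos leqnn.
  by have [_ _ _ [[nE _] _] _] := iter k kk.
have IBk := IB k (leqnn k).
have [sBk uZ xge] := IBk.
have [uq lind sumpos dual1 dualp] := inv_props IBk p0.
set x := basic_sol z (B k) p in xge sumpos dualp nuE.
have px : p^T = basis_mx z (B k) *m x by rewrite /x /basic_sol mulKVmx.
have SE : \sum_(m <- B k) nu k m = \sum_(i < n.+1) x i ord0.
  by rewrite (sum_nthS _ sBk); apply: eq_bigr => i _; rewrite nuE.
have beta0 : 0 < beta by rewrite /beta SE invr_gt0.
have alpha0 : 0 < alpha by rewrite /alpha invr_gt0.
have memB : forall m, m \in B k -> exists i : 'I_n.+1, m = nth 0 (B k) i.
  move=> m mB; have mi : (index m (B k) < n.+1)%N by rewrite -sBk index_mem.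
  by exists (Ordinal mi); rewrite nth_index.
have w0 : forall m, m \in B k -> 0 <= beta * nu k m.
  move=> m /memB [i0 ->]; rewrite nuE; apply: mulr_ge0; [exact: ltW | exact: xge].
have w1 : \sum_(m <- B k) beta * nu k m = 1.
  by rewrite -mulr_sumr /beta mulVf // SE gt_eqF.
have zcE : zc = beta *: p.
  rewrite /zc (sum_nthR _ sBk).
  have -> : p = (basis_mx z (B k) *m x)^T by rewrite -px trmxK.
  rewrite basis_mulE scaler_sumr; apply: eq_bigr => i _; by rewrite nuE scalerA.
have zc1C : C1 zc1.
  rewrite /zc1; apply: convex_comb => //.
  by move=> m0 /(BMi k (leqnn k)) /(MiC k (leqnn k)) [].
have zc2C : C2 zc2.
  rewrite /zc2; apply: convex_comb => //.
  by move=> m0 /(BMi k (leqnn k)) /(MiC k (leqnn k)) [].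
have zcD : zc = zc1 - zc2 + p.
  rewrite /zc /zc1 /zc2 /z.
  rewrite (eq_bigr (fun m => (beta * nu k m) *: zz1 m - (beta * nu k m) *: zz2 m + (beta * nu k m) *: p)); last by move=> m0 _; rewrite !scalerDr scalerN.
  by rewrite big_split /= sumrB -scaler_suml w1 scale1r.
clearbody zc zc1 zc2.
split.
- split; [split|split] => //.
  + by exists zc1, zc2.
  split; first exact: ltW.
  split => //; split => //.
  apply/rowP => c.
  have := congr1 (fun v : 'rV[R]_n.+1 => v ord0 c) zcD.
  rewrite zcE !mxE => e.
  have e1 : zc1 ord0 c = zc2 ord0 c + beta * (p2 ord0 c - p1 ord0 c) - (p2 ord0 c - p1 ord0 c).
    by move: e; rewrite /p ?mxE => e; lra.
  by rewrite /alpha e1 /p ?mxE; field; rewrite gt_eqF.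
- case: (posnP k) => [k0|kpos].
    have inf0 : 0 < infnorm p := infnorm_gt0 p0.
    split.
      move=> m1 m2; rewrite k0 B0 lam0 => h1 h2.
      have e1 := dI m1 h1; have e2 := dI m2 h2.
      rewrite !dotZl; congr (_ * _); exact: (etrans e1 (esym e2)).
    by rewrite k0 lam0 dotZl mulr_gt0 ?invr_gt0 // dot_gt0.
  have kk : (0 < k <= k)%N by rewrite kpos leqnn.
  have [_ _ _ _ lamE] := iter k kk.
  have lamE' : lam k = (infnorm (dual_vec z (B k)))^-1 *: dual_vec z (B k) := lamE.
  have wn0 : dual_vec z (B k) != 0.
    apply/negP => /eqP wz; move: dualp; rewrite wz dotC dot0r => e.
    by move: sumpos; rewrite -e ltxx.
  split.
    move=> m1 m2 /memB [i1 ->] /memB [i2 ->].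
    by rewrite lamE' !dotZl !dual1.
  by rewrite lamE' dotZl dualp mulr_gt0 // invr_gt0 infnorm_gt0.
- split.
    move=> m mB; have [h1 h2] := MiC k (leqnn k) m (BMi k (leqnn k) m mB).
    by exists (zz1 m), (zz2 m).
  by [].
Qed.
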